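(* Let $R$ be a commutative ring with unit and let $S'\subset S\subset \mathbb{N}=\{1,2,\ldots\}$. Suppose that for each $n\in S$ there is a finite sequence $n'=n_0\Leftrightarrow_R n_1\Leftrightarrow_R\cdots\Leftrightarrow_R n_r=n$ ($r\ge 0$) of elements of $S$ with $n'\in S'$. Then the homomorphism $\rho^R_{S,S'}\colon R[q]^S\to R[q]^{S'}$ is injective. In particular, if $S\subset\mathbb{N}$ is $\Leftrightarrow_R$-connected, then for any nonempty subset $S'\subset S$ the homomorphism $\rho^R_{S,S'}$ is injective. More particularly, for any nonempty subset $S'\subset\mathbb{N}$ the homomorphism $\rho^{\mathbb{Z}}_{\mathbb{N},S'}\colon \mathbb{Z}[q]^{\mathbb{N}}\to\mathbb{Z}[q]^{S'}$ is injective.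
   Context: All rings are commutative with unit; $q$ is an indeterminate. For $n\in\mathbb{N}$, $\Phi_n(q)\in\mathbb{Z}[q]$ is the $n$th cyclotomic polynomial. For $S\subset\mathbb{N}$, let $\Phi_S^*$ be the multiplicative subset of $\mathbb{Z}[q]$ generated by $\{\Phi_n(q): n\in S\}$, viewed as a directed set under divisibility, and define the cyclotomic completion $R[q]^S=\varprojlim_{f\in\Phi_S^*}R[q]/(f)$. For $S'\subset S$, $\rho^R_{S,S'}\colon R[q]^S\to R[q]^{S'}$ is the homomorphism induced by the identity of $R[q]$. A ring $R$ is $p$-adically separated if $\bigcap_{j\ge0}p^jR=(0)$. For $n,n'\in\mathbb{N}$ write $n\Leftrightarrow_R n'$ if either $n=n'$, or $n/n'$ is an integer power (positive or negative exponent) of a prime $p$ such that $R$ is $p$-adically separated, or $R=\{0\}$. A subset $S\subset\mathbb{N}$ is $\Leftrightarrow_R$-connected if it is nonempty and any two of its elements are joined by a finite chain of elements of $S$ consecutive ones of which are related by $\Leftrightarrow_R$. *)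

(* Defs.v *)
From HB Require Import structures.
From mathcomp Require Import all_boot all_order all_algebra.
From mathcomp Require Import cyclotomic.
Unset Implicit Arguments. Unset Printing Implicit Defensive.
Import Order.TTheory GRing.Theory Num.Theory.
Local Open Scope ring_scope.

Definition pdvd {R : comNzRingType} (f g : {poly R}) : Prop :=
  exists h : {poly R}, g = h * f.

Definition polyZR (R : comNzRingType) (f : {poly int}) : {poly R} :=
  map_poly (fun z : int => z%:~R) f.

Definition PhiS (S : nat -> Prop) (f : {poly int}) : Prop :=
  exists s : seq nat, (forall n, n \in s -> S n) /\ f = \prod_(n <- s) 'Phi_n.

(* An element of R[q]^S = lim_{f in Phi_S^*} R[q]/(f), given by a choice of
   representatives x f in R[q] of its components in R[q]/(f), compatible with
   the transition maps R[q]/(g) -> R[q]/(f) for f | g (divisibility in Z[q]). *)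
Definition cyc_elt (R : comNzRingType) (S : nat -> Prop)
    (x : {poly int} -> {poly R}) : Prop :=
  forall f g, PhiS S f -> PhiS S g -> pdvd f g ->
    pdvd (polyZR R f) (x g - x f).

Definition cyc_eq (R : comNzRingType) (S : nat -> Prop)
    (x y : {poly int} -> {poly R}) : Prop :=
  forall f, PhiS S f -> pdvd (polyZR R f) (x f - y f).

(* rho^R_{S,S'} sends (x_f)_{f in Phi_S^*} to (x_f)_{f in Phi_S'^*}, i.e. the
   same representatives restricted; injectivity of rho^R_{S,S'}: *)
Definition rho_injective (R : comNzRingType) (S S' : nat -> Prop) : Prop :=
  forall x y : {poly int} -> {poly R},
    cyc_elt R S x -> cyc_elt R S y -> cyc_eq R S' x y -> cyc_eq R S x y.

Definition padic_separated (R : comNzRingType) (p : nat) : Prop :=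
  forall r : R, (forall j : nat, exists s : R, r = (p ^ j)%N%:R * s) -> r = 0.

(* n <=>_R n'  (R is nonzero here, so the clause R = {0} is vacuous). *)
Definition equivR (R : comNzRingType) (n n' : nat) : Prop :=
  n = n' \/
  exists p k : nat, prime p /\ padic_separated R p /\
    (n = (n' * p ^ k)%N \/ n' = (n * p ^ k)%N).

Definition chain_in (R : comNzRingType) (S : nat -> Prop) (a b : nat) : Prop :=
  exists (r : nat) (ns : nat -> nat),
    ns 0%N = a /\ ns r = b /\ (forall i, (i <= r)%N -> S (ns i)) /\
    (forall i, (i < r)%N -> equivR R (ns i) (ns i.+1)).

Definition connectedR (R : comNzRingType) (S : nat -> Prop) : Prop :=
  (exists n, S n) /\ forall a b, S a -> S b -> chain_in R S a b.

(* Main.v *)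
Require Import Defs.
From HB Require Import structures.
From mathcomp Require Import all_boot all_order all_algebra.
From mathcomp Require Import cyclotomic.
From mathcomp Require Import algC zify ring.
Set Implicit Arguments. Unset Strict Implicit. Unset Printing Implicit Defensive.
Import Order.TTheory GRing.Theory Num.Theory.
Local Open Scope ring_scope.


Local Notation pZtoC := (map_poly (intr : int -> algC)).

Lemma Phi_roots n : (0 < n)%N -> exists rs : seq algC,
  pZtoC 'Phi_n = \prod_(x <- rs) ('X - x%:P) /\ uniq rs /\
  (forall x, (x \in rs) = n.-primitive_root x).
Proof.
move=> n_gt0; have [z pz] := C_prim_root_exists n_gt0.
set rs := [seq z ^+ i | i : 'I_n in [pred i : 'I_n | coprime i n]].
have E : pZtoC 'Phi_n = \prod_(x <- rs) ('X - x%:P).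
  by rewrite (Cintr_Cyclotomic pz) /cyclotomic big_image.
exists rs; split=> //; split.
  rewrite /rs /image_mem map_inj_in_uniq ?enum_uniq // => i j _ _ /eqP.
  rewrite (eq_prim_root_expr pz) !modn_small // => /eqP; exact: val_inj.
move=> x; by rewrite -(root_cyclotomic pz) -(Cintr_Cyclotomic pz) E root_prod_XsubC.
Qed.

Lemma dvd_by_roots (rs : seq algC) (P : {poly algC}) : uniq rs ->
  (forall x, x \in rs -> root P x) -> \prod_(x <- rs) ('X - x%:P) %| P.
Proof.
move=> u H; apply: uniq_roots_dvdp; last by rewrite uniq_rootsE.
by apply/allP => x /H.
Qed.

Lemma dvd_int_C (A B : {poly int}) : B \is monic -> pZtoC B %| pZtoC A ->
  exists Q, A = Q * B.
Proof.
move=> mB dv; have E := Pdiv.RingMonic.rdivp_eq mB A.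
set r := Pdiv.Ring.rmodp A B in E.
suff r0 : r = 0 by exists (Pdiv.Ring.rdivp A B); rewrite {1}E r0 addr0.
have dvr : pZtoC B %| pZtoC r.
  have -> : r = A - Pdiv.Ring.rdivp A B * B by rewrite {1}E addrC addKr.
  rewrite rmorphB rmorphM /=.
  by rewrite dvdp_sub // dvdp_mull.
have szr : (size r < size B)%N.
  by rewrite Pdiv.Ring.ltn_rmodp monic_neq0.
apply/eqP; rewrite -size_poly_eq0 -(size_map_inj_poly (@intr_inj algC)) //.
rewrite size_poly_eq0; apply/negPn/negP => nz.
have := dvdp_leq nz dvr.
rewrite !(size_map_inj_poly (@intr_inj algC)) //.
by rewrite leqNgt szr.
Qed.

Lemma monic_dvd_eq (A B Q : {poly int}) : A \is monic -> B \is monic ->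
  size A = size B -> A = Q * B -> A = B.
Proof.
move=> mA mB szE E.
have Q0 : Q != 0 by apply: contraTneq mA => Q0; rewrite E Q0 mul0r monicE lead_coef0.
have h : (size Q + size B).-1 = size B.
    by rewrite -size_mul ?(monic_neq0 mB) // -E szE.
have := monic_neq0 mB; rewrite -size_poly_eq0 => sB.
have sQ : size Q = 1%N.
  by move: h sB; case: (size B) => // b; rewrite addnS /= => h' _; lia.
have c1 : lead_coef Q = 1.
  by have := monicP mA; rewrite E lead_coefM (monicP mB) mulr1.
have Q1 : Q = 1.
  by rewrite (size1_polyC (eq_leq sQ)); move: c1; rewrite lead_coefE sQ => ->.
by rewrite E Q1 mul1r.
Qed.

Lemma prim_order_uniq (z : algC) m n :
  m.-primitive_root z -> n.-primitive_root z -> m = n.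
Proof.
move=> pm pn; apply/eqP.
by rewrite eqn_dvd (prim_order_dvd pm) (prim_expr_order pn) (prim_order_dvd pn) (prim_expr_order pm) eqxx.
Qed.

Lemma compXp_monic p (A : {poly int}) : prime p -> A \is monic ->
  (A \Po 'X^p) \is monic /\ size (A \Po 'X^p) = ((size A).-1 * p).+1.
Proof.
move=> pp mA.
have sX : (1 < size ('X^p : {poly int}))%N by rewrite size_polyXn ltnS prime_gt0.
have m : (A \Po 'X^p) \is monic.
  by rewrite monicE lead_coef_comp // (monicP mA) lead_coefXn expr1n mulr1.
split=> //.
by rewrite (polySpred (monic_neq0 m)) size_comp_poly size_polyXn.
Qed.

Lemma root_compXp (P : {poly int}) p (w : algC) :
  root (pZtoC (P \Po 'X^p)) w = root (pZtoC P) (w ^+ p).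
Proof. by rewrite map_comp_poly map_polyXn /root horner_comp hornerXn. Qed.

Lemma totient_mulp_dvd p n : prime p -> (0 < n)%N -> (p %| n)%N ->
  totient (n * p) = (totient n * p)%N.
Proof.
move=> pp n0 pn; have p0 := prime_gt0 pp; have np : (0 < n * p)%N by rewrite muln_gt0 n0.
rewrite !totientE //.
have pin : p \in primes n by rewrite mem_primes pp n0.
have -> : primes (n * p) = primes n.
  apply/eq_primes => q; rewrite primesM // (primes_prime pp) inE orbC.
  by case: eqP => // ->; rewrite pin.
rewrite (bigD1_seq p pin (primes_uniq n)) (bigD1_seq p pin (primes_uniq n)) /=.
rewrite lognM // (logn_prime p pp) eqxx addn1 /=.
have -> : (\prod_(i <- primes n | i != p) (i.-1 * i ^ (logn i (n * p)).-1)
   = \prod_(i <- primes n | i != p) (i.-1 * i ^ (logn i n).-1))%N.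
  apply: eq_bigr => q qp; rewrite lognM // (logn_prime q pp) (negbTE qp) addn0 //.
have : (0 < logn p n)%N by rewrite logn_gt0.
case: (logn p n) => // e _ /=; rewrite expnSr; nia.
Qed.

Lemma Phi_comp_dvd p n : prime p -> (0 < n)%N -> (p %| n)%N ->
  'Phi_(n * p) = 'Phi_n \Po 'X^p.
Proof.
move=> pp n0 pn; have p0 := prime_gt0 pp; have np : (0 < n * p)%N by rewrite muln_gt0 n0.
have [mA sA] := compXp_monic pp (Cyclotomic_monic n).
have [rs1 [E1 [u1 M1]]] := Phi_roots np.
have [rs2 [E2 [u2 M2]]] := Phi_roots n0.
have dv : pZtoC 'Phi_(n * p) %| pZtoC ('Phi_n \Po 'X^p).
  rewrite E1; apply: dvd_by_roots => // x; rewrite M1 => px.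
  rewrite root_compXp E2 root_prod_XsubC M2.
  by have := exp_prim_root px p; rewrite gcdnMl mulnK.
have [Q EQ] := dvd_int_C (Cyclotomic_monic (n * p)) dv.
symmetry; apply: (monic_dvd_eq mA (Cyclotomic_monic _) _ EQ).
by rewrite sA !size_Cyclotomic totient_mulp_dvd.
Qed.

Lemma Phi_comp_ndvd p n : prime p -> (0 < n)%N -> ~~ (p %| n)%N ->
  'Phi_(n * p) * 'Phi_n = 'Phi_n \Po 'X^p.
Proof.
move=> pp n0 pn; have p1 := prime_gt1 pp; have np : (0 < n * p)%N by rewrite muln_gt0 n0 ltnW.
have [mA sA] := compXp_monic pp (Cyclotomic_monic n).
have [rs1 [E1 [u1 M1]]] := Phi_roots np.
have [rs2 [E2 [u2 M2]]] := Phi_roots n0.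
have mB : 'Phi_(n * p) * 'Phi_n \is monic by rewrite monicMl Cyclotomic_monic.
have dv : pZtoC ('Phi_(n * p) * 'Phi_n) %| pZtoC ('Phi_n \Po 'X^p).
  rewrite rmorphM /= E1 E2 -big_cat; apply: dvd_by_roots.
    rewrite cat_uniq u1 u2 andbT /=; apply/hasPn => x; rewrite M2 => px.
    rewrite M1; apply/negP => px'; have := prim_order_uniq px' px; nia.
  move=> x; rewrite mem_cat M1 M2 root_compXp E2 root_prod_XsubC M2 => /orP[px|px].
    by have := exp_prim_root px p; rewrite gcdnMl mulnK // ltnW.
  by rewrite prim_root_exp_coprime // prime_coprime.
have [Q EQ] := dvd_int_C mB dv.
symmetry; apply: (monic_dvd_eq mA mB _ EQ).
rewrite sA size_mul ?monic_neq0 ?Cyclotomic_monic // !size_Cyclotomic.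
rewrite totient_coprime; last by rewrite coprime_sym prime_coprime.
rewrite (totient_prime pp).
have Hp : p = p.-1.+1 by lia.
move: (totient n) (p.-1) Hp => t q ->; rewrite /=; lia.
Qed.


Definition phiF (p : nat) (A : {poly int}) : {poly 'F_p} := map_poly (intr : int -> 'F_p) A.

Lemma frob_comp p (A : {poly int}) : prime p ->
  phiF p (A \Po 'X^p) = (phiF p A) ^+ p.
Proof.
move=> pp; have ch : p \in [pchar {poly 'F_p}] by rewrite pchar_poly pchar_Fp.
rewrite /phiF map_comp_poly map_polyXn comp_polyE; set B := map_poly _ A.
have -> : B ^+ p = (\poly_(i < size B) B`_i) ^+ p by rewrite coefK.
rewrite poly_def -[in RHS](pFrobenius_autE ch) rmorph_sum /=.
apply: eq_bigr => i _; rewrite -!mul_polyC rmorphM /= !pFrobenius_autE.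
rewrite -polyC_exp coef_map /= -(pFrobenius_autE (pchar_Fp pp)) pFrobenius_aut_int.
by rewrite exprAC mul_polyC.
Qed.

Lemma lift_mod p (A B : {poly int}) : prime p -> B \is monic ->
  phiF p B %| phiF p A -> exists u v, A = u * B + p%:R * v.
Proof.
move=> pp mB dv; have E := Pdiv.RingMonic.rdivp_eq mB A.
set r := Pdiv.Ring.rmodp A B in E.
suff [v rv] : exists v, r = p%:R * v.
  by exists (Pdiv.Ring.rdivp A B), v; rewrite {1}E rv.
have dvr : phiF p B %| phiF p r.
  have -> : r = A - Pdiv.Ring.rdivp A B * B by rewrite {1}E addrC addKr.
  by rewrite /phiF rmorphB rmorphM /= dvdp_sub // dvdp_mull.
have szr : (size r < size B)%N.
  by rewrite Pdiv.Ring.ltn_rmodp monic_neq0.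
have r0 : phiF p r = 0.
  apply/eqP/negPn/negP => nz.
  have := dvdp_leq nz dvr; rewrite leqNgt.
  have -> : size (phiF p B) = size B.
    by rewrite /phiF size_map_poly_id0 // (monicP mB) rmorph1 oner_neq0.
  by rewrite (leq_ltn_trans (size_poly _ _) szr).
have dz i : (p%:Z %| r`_i)%Z.
  rewrite (dvdz_pcharf (pchar_Fp pp)); apply/eqP.
  by move: r0 => /(congr1 (fun q : {poly 'F_p} => q`_i)); rewrite /phiF coef_map coef0.
exists (\poly_(i < size r) (r`_i %/ p%:Z)%Z); apply/polyP => i.
rewrite -polyC_natr coefCM coef_poly; case: ifP => [_|/negbT].
  by rewrite mulrC natz divzK.
by rewrite -leqNgt => /(nth_default 0) ->; rewrite mulr0.
Qed.

Definition Dv p a b := exists c, phiF p 'Phi_b %| (phiF p 'Phi_a) ^+ c.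

Lemma Dv_trans p a b c : Dv p a b -> Dv p b c -> Dv p a c.
Proof.
move=> [c1 d1] [c2 d2]; exists (c1 * c2)%N.
by rewrite exprM; apply: (dvdp_trans d2); apply: dvdp_exp2r.
Qed.

Lemma Dv_refl p a : Dv p a a.
Proof. by exists 1%N; rewrite expr1 dvdpp. Qed.

Lemma phiF_neq0 p n : phiF p 'Phi_n != 0.
Proof.
by rewrite -size_poly_eq0 /phiF size_map_poly_id0 ?(monicP (Cyclotomic_monic n)) ?rmorph1 ?oner_neq0 // size_poly_eq0 monic_neq0 // Cyclotomic_monic.
Qed.

Lemma Dv_step p n : prime p -> (0 < n)%N -> Dv p n (n * p) /\ Dv p (n * p) n.
Proof.
move=> pp n0; have p1 := prime_gt1 pp.
have [pn|pn] := boolP (p %| n)%N.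
  have E : phiF p 'Phi_(n * p) = phiF p 'Phi_n ^+ p by rewrite Phi_comp_dvd // frob_comp.
  split; first by exists p; rewrite E dvdpp.
  by exists 1%N; rewrite E expr1 dvdp_exp ?dvdpp // ltnW.
have E : phiF p 'Phi_(n * p) * phiF p 'Phi_n = phiF p 'Phi_n ^+ p.
  by rewrite -frob_comp // -Phi_comp_ndvd // /phiF rmorphM.
split; first by exists p; rewrite -E dvdp_mulIl.
have E' : phiF p 'Phi_(n * p) = phiF p 'Phi_n ^+ p.-1.
  apply: (mulIf (phiF_neq0 p n)); rewrite E -exprSr prednK //; lia.
by exists 1%N; rewrite E' expr1 dvdp_exp ?dvdpp //; rewrite -subn1 subn_gt0.
Qed.

Lemma Dv_pow p n k : prime p -> (0 < n)%N -> Dv p n (n * p ^ k) /\ Dv p (n * p ^ k) n.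
Proof.
move=> pp n0; elim: k => [|k [IH1 IH2]].
  by rewrite expn0 muln1; split; apply: Dv_refl.
have nk0 : (0 < n * p ^ k)%N by rewrite muln_gt0 n0 expn_gt0 prime_gt0.
have [S1 S2] := Dv_step pp nk0; rewrite expnSr mulnA.
by split; [apply: (Dv_trans IH1 S1) | apply: (Dv_trans S2 IH2)].
Qed.

Lemma Dv_lift p a b : prime p -> Dv p a b ->
  exists c u v, 'Phi_a ^+ c = u * 'Phi_b + p%:R * v.
Proof.
move=> pp [c dv].
have [u [v E]] : exists u v, 'Phi_a ^+ c = u * 'Phi_b + p%:R * v.
  by apply: lift_mod pp (Cyclotomic_monic b) _; rewrite /phiF rmorphXn.
by exists c, u, v.
Qed.


Lemma pow_split (K : comNzRingType) (X Y P u v : K) : X = u * Y + P * v ->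
  forall a b, exists s t, X ^+ (a + b) = s * Y ^+ a + t * P ^+ b.
Proof.
move=> E; elim=> [|a IHa] b.
  by exists (X ^+ b), 0; rewrite expr0 mulr1 mul0r addr0 add0n.
elim: b => [|b IHb].
  by exists 0, (X ^+ (a.+1 + 0)); rewrite expr0 mulr1 mul0r add0r.
have [s [t E1]] := IHa b.+1; have [s' [t' E2]] := IHb.
exists (u * s + P * v * s'), (u * t * Y + v * t').
have E2' : X ^+ (a + b.+1) = s' * Y ^+ a.+1 + t' * P ^+ b by rewrite addnS -addSn.
have -> : (a.+1 + b.+1 = (a + b.+1).+1)%N by lia.
rewrite exprS {1}E mulrDl -mulrA {1}E1 -mulrA E2' !exprS; ring.
Qed.

Lemma sep_rmod (R : comNzRingType) p (M w : {poly R}) : M \is monic ->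
  padic_separated R p ->
  (forall j, exists t v, w = t * M + (p ^ j)%N%:R * v) -> exists t, w = t * M.
Proof.
move=> mM sep H; have E := Pdiv.RingMonic.rdivp_eq mM w.
set r := Pdiv.Ring.rmodp w M in E.
suff r0 : r = 0 by exists (Pdiv.Ring.rdivp w M); rewrite {1}E r0 addr0.
apply/polyP => i; rewrite coef0; apply: sep => j.
have [t [v Ew]] := H j.
have -> : r = (p ^ j)%N%:R *: Pdiv.Ring.rmodp v M.
  rewrite /r Ew Pdiv.RingMonic.rmodpD // Pdiv.RingMonic.rmodp_mull // add0r.
  by rewrite -polyC_natr mul_polyC Pdiv.RingMonic.rmodpZ.
by exists (Pdiv.Ring.rmodp v M)`_i; rewrite coefZ.
Qed.

Definition prodPhi (s : seq nat) : {poly int} := \prod_(n <- s) 'Phi_n.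

Lemma prodPhi_cat s1 s2 : prodPhi (s1 ++ s2) = prodPhi s1 * prodPhi s2.
Proof. by rewrite /prodPhi big_cat. Qed.

Lemma prodPhi_nseq N n : prodPhi (nseq N n) = 'Phi_n ^+ N.
Proof. by elim: N => [|N IH]; rewrite /prodPhi ?big_nil ?expr0 // big_cons -/(prodPhi _) IH exprS. Qed.

Lemma prodPhi_split m s :
  prodPhi s = prodPhi [seq k <- s | k != m] * 'Phi_m ^+ (count_mem m s).
Proof.
elim: s => [|k s IH]; first by rewrite /prodPhi !big_nil expr0 mulr1.
rewrite /= /prodPhi big_cons -/(prodPhi _) IH.
case: (eqVneq k m) => [->|km] /=.
  by rewrite -/(prodPhi _) add1n exprS; ring.
by rewrite big_cons -/(prodPhi _) add0n mulrA.
Qed.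

Lemma PhiS_prod (S : nat -> Prop) s : (forall n, n \in s -> S n) -> PhiS S (prodPhi s).
Proof. by move=> H; exists s. Qed.

Lemma polyZR_M R (f g : {poly int}) : polyZR R (f * g) = polyZR R f * polyZR R g.
Proof. by rewrite /polyZR rmorphM. Qed.
Lemma polyZR_X R (f : {poly int}) k : polyZR R (f ^+ k) = polyZR R f ^+ k.
Proof. by rewrite /polyZR rmorphXn. Qed.
Lemma polyZR_D R (f g : {poly int}) : polyZR R (f + g) = polyZR R f + polyZR R g.
Proof. by rewrite /polyZR rmorphD. Qed.
Lemma polyZR_nat R k : polyZR R k%:R = k%:R.
Proof. by rewrite /polyZR rmorph_nat. Qed.
Lemma polyZR_monic R (f : {poly int}) : f \is monic -> polyZR R f \is monic.
Proof. by move=> m; rewrite /polyZR monic_map. Qed.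
Lemma prodPhi_monic s : prodPhi s \is monic.
Proof. by apply: monic_prod => n _; apply: Cyclotomic_monic. Qed.

Definition zcompat (R : comNzRingType) (S : nat -> Prop) (z : {poly int} -> {poly R}) :=
  forall f g, PhiS S f -> PhiS S g -> pdvd f g -> pdvd (polyZR R f) (z g - z f).

Definition Pgood (R : comNzRingType) (z : {poly int} -> {poly R}) (A : nat -> Prop) :=
  forall s, (forall n, n \in s -> A n) -> pdvd (polyZR R (prodPhi s)) (z (prodPhi s)).

Lemma step (R : comNzRingType) (S A : nat -> Prop) (z : {poly int} -> {poly R}) n m p c u v :
  zcompat S z -> (forall k, A k -> S k) -> Pgood z A -> A n -> S m ->
  padic_separated R p -> 'Phi_n ^+ c = u * 'Phi_m + p%:R * v ->
  Pgood z (fun k => A k \/ k = m).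
Proof.
move=> zc AS PA An Sm sep Euv s Hs.
set l := [seq k <- s | k != m]; set b := count_mem m s.
have lA : forall k, k \in l -> A k.
  move=> k; rewrite mem_filter => /andP[km ks].
  by case: (Hs k ks) => // km'; rewrite km' eqxx in km.
have gE := prodPhi_split m s; rewrite -/l -/b in gE.
set g := prodPhi s in gE *.
apply: (sep_rmod (p := p)) => //; first by apply/polyZR_monic/prodPhi_monic.
move=> j.
have [s1 [t1 Epow]] := pow_split Euv b j.
set N := (c * (b + j))%N.
set l' := l ++ nseq N n.
have l'A : forall k, k \in l' -> A k.
  by move=> k; rewrite mem_cat mem_nseq => /orP[/lA //|/andP[_ /eqP ->]].
set F := prodPhi l'.
have FE : F = prodPhi l * 'Phi_n ^+ N by rewrite /F prodPhi_cat prodPhi_nseq.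
set G := prodPhi (l' ++ nseq b m).
have GE : G = F * 'Phi_m ^+ b by rewrite /G prodPhi_cat prodPhi_nseq.
have l'S : forall k, k \in l' -> S k by move=> k /l'A /AS.
have GS : PhiS S G.
  apply: PhiS_prod => k; rewrite mem_cat => /orP[/l'S //|]; rewrite mem_nseq => /andP[_ /eqP ->] //.
have gS : PhiS S g.
  apply: PhiS_prod => k ks; case: (Hs k ks) => [/AS //|->] //.
have FS : PhiS S F by apply: PhiS_prod.
have [a1 e1] : pdvd (polyZR R g) (z G - z g).
  apply: zc => //; exists ('Phi_n ^+ N); rewrite GE FE gE; ring.
have [a2 e2] : pdvd (polyZR R F) (z G - z F).
  by apply: zc => //; exists ('Phi_m ^+ b); rewrite GE mulrC.
have [a e3] := PA l' l'A; rewrite -/F in e3.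
have zg : z g = z G - a1 * polyZR R g by rewrite -e1; ring.
have zG : z G = z F + a2 * polyZR R F by rewrite -e2; ring.
have eN : 'Phi_n ^+ N = s1 * 'Phi_m ^+ b + t1 * p%:R ^+ j by rewrite /N exprM Epow.
exists ((a + a2) * polyZR R s1 - a1), ((a + a2) * polyZR R (prodPhi l) * polyZR R t1).
have eNR : polyZR R ('Phi_n ^+ N) = polyZR R s1 * polyZR R 'Phi_m ^+ b + polyZR R t1 * (p ^ j)%N%:R.
  rewrite eN polyZR_D !polyZR_M !polyZR_X natrX; congr (_ + _ * (_ ^+ _)).
  exact: polyZR_nat.
rewrite zg zG e3 FE gE !polyZR_M eNR polyZR_X; ring.
Qed.

Lemma grow (R : comNzRingType) (S : nat -> Prop) (z : {poly int} -> {poly R})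
  (zc : zcompat S z) (Spos : forall n, S n -> (0 < n)%N) (A : nat -> Prop)
  (AS : forall k, A k -> S k) (PA : Pgood z A) n' n :
  A n' -> chain_in R S n' n ->
  exists A' : nat -> Prop, (forall k, A k -> A' k) /\ (forall k, A' k -> S k) /\
     Pgood z A' /\ A' n.
Proof.
move=> An' [r [ns [h0 [hr [hS heq]]]]].
suff H : forall i, (i <= r)%N -> exists A' : nat -> Prop, (forall k, A k -> A' k) /\
    (forall k, A' k -> S k) /\ Pgood z A' /\ A' (ns i).
  by rewrite -hr; apply: H.
elim=> [_|i IH ir].
  by exists A; split => //; split => //; split => //; rewrite h0.
have [A' [h1 [h2 [h3 h4]]]] := IH (ltnW ir).
case: (heq i ir) => [eq|[p [k [pp [sep E]]]]].
  by exists A'; rewrite -eq.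
have a0 : (0 < ns i)%N by apply/Spos/hS/ltnW.
have m0 : (0 < ns i.+1)%N by apply/Spos/hS.
have Dam : Dv p (ns i) (ns i.+1).
  case: E => ->; first exact: (Dv_pow k pp m0).2.
  exact: (Dv_pow k pp a0).1.
have [c [u [v Euv]]] := Dv_lift pp Dam.
exists (fun q => A' q \/ q = ns i.+1); split; first by move=> q /h1; left.
split; first by move=> q [/h2 //|->]; apply: hS.
split; last by right.
exact: (step zc h2 h3 h4 (hS _ ir) sep Euv).
Qed.

Lemma part1 (R : comNzRingType) (S S' : nat -> Prop) :
  (forall n, S n -> (0 < n)%N) -> (forall n, S' n -> S n) ->
  (forall n, S n -> exists n', S' n' /\ chain_in R S n' n) -> rho_injective R S S'.
Proof.
move=> Spos S'S H x y cx cy e'.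
pose z := fun f => x f - y f.
have zc : zcompat S z.
  move=> f g Sf Sg fg; have [a1 E1] := cx f g Sf Sg fg; have [a2 E2] := cy f g Sf Sg fg.
  by exists (a1 - a2); rewrite /z mulrBl -E1 -E2; ring.
have P' : Pgood z S' by move=> s Hs; exact: (e' (prodPhi s) (PhiS_prod Hs)).
have Hs : forall s : seq nat, (forall n, n \in s -> S n) -> exists A : nat -> Prop,
    (forall k, S' k -> A k) /\ (forall k, A k -> S k) /\ Pgood z A /\
    (forall n, n \in s -> A n).
  elim => [_|n s IH Hns]; first by exists S'; split => //; split.
  have [A [a1 [a2 [a3 a4]]]] : exists A : nat -> Prop,
    (forall k, S' k -> A k) /\ (forall k, A k -> S k) /\ Pgood z A /\
    (forall n, n \in s -> A n).
    by apply: IH => k ks; apply: Hns; rewrite inE ks orbT.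
  have [n' [Sn' ch]] := H n (Hns n (mem_head n s)).
  have [A' [b1 [b2 [b3 b4]]]] := grow zc Spos a2 a3 (a1 _ Sn') ch.
  exists A'; split; first by move=> k /a1 /b1.
  split => //; split => // k; rewrite inE => /orP[/eqP -> //|/a4 /b1 //].
move=> f [s [sS ->]]; have [A [_ [_ [PA sA]]]] := Hs s sS; exact: (PA s sA).
Qed.

Lemma equivR_sym R a b : equivR R a b -> equivR R b a.
Proof.
case=> [->|[p [k [pp [sep [E|E]]]]]]; first by left.
  by right; exists p, k; split => //; split => //; right.
by right; exists p, k; split => //; split => //; left.
Qed.

Lemma chain_refl R (S : nat -> Prop) a : S a -> chain_in R S a a.
Proof. by move=> Sa; exists 0%N, (fun _ => a). Qed.

Lemma chain_snoc R (S : nat -> Prop) a b c :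
  chain_in R S a b -> S c -> equivR R b c -> chain_in R S a c.
Proof.
move=> [r [ns [h0 [hr [hS heq]]]]] Sc e.
exists r.+1, (fun i => if (i <= r)%N then ns i else c); split => //.
split; first by rewrite ltnn.
split; first by move=> i _; case: ifP => // /hS.
move=> i ir; rewrite -ltnS ir /=; case: ifP => [ir'|/negbT]; first exact: heq.
rewrite -ltnNge => ri; have -> : i = r by lia.
by rewrite hr.
Qed.

Lemma chain_cat R (S : nat -> Prop) a b c :
  chain_in R S a b -> chain_in R S b c -> chain_in R S a c.
Proof.
move=> cab [r [ns [h0 [hr [hS heq]]]]]; rewrite -hr.
suff : forall i, (i <= r)%N -> chain_in R S a (ns i) by apply.
elim=> [_|i IH ir]; first by rewrite h0.
exact: (chain_snoc (IH (ltnW ir)) (hS _ ir) (heq _ ir)).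
Qed.

Lemma chain_rev R (S : nat -> Prop) a b : chain_in R S a b -> chain_in R S b a.
Proof.
move=> [r [ns [h0 [hr [hS heq]]]]].
exists r, (fun i => ns (r - i)%N); split; first by rewrite subn0.
split; first by rewrite subnn.
split; first by move=> i _; apply: hS; rewrite leq_subr.
move=> i ir; have -> : (r - i = (r - i.+1).+1)%N by lia.
by apply: equivR_sym; apply: heq; lia.
Qed.

Lemma chain_from1 R (S : nat -> Prop) :
  (forall p, prime p -> padic_separated R p) -> (forall n, (0 < n)%N -> S n) ->
  forall n, (0 < n)%N -> chain_in R S 1 n.
Proof.
move=> sep Spos; elim/ltn_ind => n IH n0.
case: (ltnP 1 n) => [n1|n1].
  2: have -> : n = 1%N by lia.
  2: by apply: chain_refl; apply: Spos.
have pp := pdiv_prime n1; set p := pdiv n in pp *.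
have pd : (p %| n)%N := pdiv_dvd n.
have m0 : (0 < n %/ p)%N by rewrite divn_gt0 ?prime_gt0 // dvdn_leq.
have mn : (n %/ p < n)%N by rewrite ltn_Pdiv ?prime_gt1.
apply: (chain_snoc (IH _ mn m0) (Spos _ n0)).
right; exists p, 1%N; split => //; split; first exact: sep.
by right; rewrite expn1 divnK.
Qed.

Lemma int_sep p : (1 < p)%N -> padic_separated int p.
Proof.
move=> p1 r H; have [s E] := H `|r|%N.
apply/eqP; apply: contraT => r0.
have s0 : s != 0 by apply: contraNneq r0 => s0; rewrite E s0 mulr0.
have : (`|r| = p ^ `|r| * `|s|)%N by rewrite {1}E abszM natz.
have := ltn_expl `|r|%N p1; rewrite -absz_gt0 in s0.
move: (p ^ `|r|)%N (`|s|)%N s0 => P t; nia.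
Qed.

Theorem theorem4p2 :
  (forall (R : comNzRingType) (S S' : nat -> Prop),
      (forall n, S n -> (0 < n)%N) ->
      (forall n, S' n -> S n) ->
      (forall n, S n -> exists n', S' n' /\ chain_in R S n' n) ->
      rho_injective R S S') /\
  (forall (R : comNzRingType) (S S' : nat -> Prop),
      (forall n, S n -> (0 < n)%N) ->
      connectedR R S ->
      (forall n, S' n -> S n) -> (exists n, S' n) ->
      rho_injective R S S') /\
  (forall S' : nat -> Prop,
      (forall n, S' n -> (0 < n)%N) -> (exists n, S' n) ->
      rho_injective int (fun n => (0 < n)%N) S').
Proof.
split; first exact: part1.
split.
  move=> R S S' Spos [_ conn] S'S [n0 Sn0]; apply: part1 => // n Sn.
  by exists n0; split => //; apply: conn => //; apply: S'S.
move=> S' S'pos [n0 Sn0]; apply: part1 => //.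
move=> n n_pos; exists n0; split => //.
have sep : forall p, prime p -> padic_separated int p by move=> p pp; apply: int_sep; apply: prime_gt1.
apply: (chain_cat (chain_rev (chain_from1 sep _ (S'pos _ Sn0)))); last exact: chain_from1.
by [].
Qed.
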